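(* Let $G$ be a Tanner graph and $S$ a stopping set in $G$, and let $t_S$ denote the largest component that an irreducible lift-realizable pseudocodeword of $G$ with support $S$ may have. If $S$ is a minimal stopping set and does not have property $\Theta$, then every pseudocodeword with support $S$ has maximal component 1 or 2; that is, $t_S=1$ or $t_S=2$.
   Context: A Tanner graph $G$ is a finite bipartite graph with variable nodes $v_1,\dots,v_n$ and check nodes; its code consists of all $x\in\{0,1\}^n$ with every check node having an even number of neighbours $v_i$ with $x_i=1$. A degree-$\ell$ lift replaces each node by $\ell$ copies and each edge by a perfect matching between copy-sets; a lift-realizable pseudocodeword $p\in\mathbb{Z}_{\ge0}^n$ is obtained from a codeword of the code of a finite lift by letting $p_i$ be the number of copies of $v_i$ assigned 1; its support is $\{v_i:p_i\ne0\}$; it is irreducible if it is not a sum of two or more nonzero codewords/pseudocodewords. A stopping set is a nonempty set $S$ of variable nodes such that every check node adjacent to $S$ is adjacent to at least two nodes of $S$; it is minimal if it contains no strictly smaller nonempty stopping set. $G_{|_S}$ is the subgraph induced by $S$ and its neighbouring check nodes. $S$ has property $\Theta$ if it contains a pair of variable nodes not joined by any path in $G_{|_S}$ passing only through check nodes of degree two. *)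

(* Defs.v *)
From mathcomp Require Import all_boot fingroup perm.
Set Implicit Arguments. Unset Strict Implicit. Unset Printing Implicit Defensive.

(* A Tanner graph: variable nodes V, check nodes C (finite types), and the
   (simple) bipartite adjacency relation adj v c. *)

(* A degree-l lift: for each edge (v,c) a permutation perms v c of 'I_l;
   copy (v,i) is joined to copy (c, perms v c i) iff adj v c. *)
Definition lift_codeword (V C : finType) (adj : V -> C -> bool) (l : nat)
  (perms : V -> C -> {perm 'I_l}) (x : V -> 'I_l -> bool) : Prop :=
  forall (c : C) (j : 'I_l),
    ~~ odd #|[set vi : V * 'I_l | [&& adj vi.1 c, perms vi.1 c vi.2 == j & x vi.1 vi.2]]|.

Definition lift_realizable (V C : finType) (adj : V -> C -> bool) (p : V -> nat) : Prop :=
  exists (l : nat) (perms : V -> C -> {perm 'I_l}) (x : V -> 'I_l -> bool),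
    0 < l /\ lift_codeword adj perms x /\ forall v, p v = #|[set i : 'I_l | x v i]|.

Definition nonzero_vec (V : finType) (p : V -> nat) : Prop := exists v, p v <> 0.

Definition irreducible_pcw (V C : finType) (adj : V -> C -> bool) (p : V -> nat) : Prop :=
  ~ exists (k : nat) (qs : 'I_k -> V -> nat),
      2 <= k /\ (forall i, nonzero_vec (qs i)) /\ (forall i, lift_realizable adj (qs i)) /\
      (forall v, p v = \sum_(i < k) qs i v).

Definition support (V : finType) (p : V -> nat) : {set V} := [set v | p v != 0].

Definition nbS (V C : finType) (adj : V -> C -> bool) (S : {set V}) (c : C) : nat :=
  #|[set v in S | adj v c]|.

Definition stopping_set (V C : finType) (adj : V -> C -> bool) (S : {set V}) : Prop :=
  S != set0 /\ forall c : C, 0 < nbS adj S c -> 2 <= nbS adj S c.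

Definition minimal_stopping_set (V C : finType) (adj : V -> C -> bool) (S : {set V}) : Prop :=
  stopping_set adj S /\ forall S' : {set V}, S' \proper S -> ~ stopping_set adj S'.

Definition deg2_step (V C : finType) (adj : V -> C -> bool) (S : {set V}) : rel V :=
  fun u w => [&& u \in S, w \in S &
     [exists c : C, [&& adj u c, adj w c & nbS adj S c == 2]]].

Definition property_Theta (V C : finType) (adj : V -> C -> bool) (S : {set V}) : Prop :=
  exists u w, [/\ u \in S, w \in S & ~~ connect (deg2_step adj S) u w].

Definition is_tS (V C : finType) (adj : V -> C -> bool) (S : {set V}) (t : nat) : Prop :=
  (exists p : V -> nat, [/\ lift_realizable adj p, irreducible_pcw adj p,
        support p = S & \max_(v : V) p v = t]) /\
  (forall p : V -> nat, lift_realizable adj p -> irreducible_pcw adj p ->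
        support p = S -> forall v, p v <= t).

(* Main.v *)
Require Import Defs.
From mathcomp Require Import all_boot fingroup perm zify.
Set Implicit Arguments. Unset Strict Implicit. Unset Printing Implicit Defensive.

Section L.
Variables (V C : finType) (adj : V -> C -> bool).

Lemma count_eq l (perms : V -> C -> {perm 'I_l}) (x : V -> 'I_l -> bool) c j :
 #|[set vi : V * 'I_l | [&& adj vi.1 c, perms vi.1 c vi.2 == j & x vi.1 vi.2]]|
 = #|[set v | adj v c && x v ((perms v c)^-1%g j)]|.
Proof.
rewrite -[RHS](card_imset _ (f := fun v => (v, (perms v c)^-1%g j))); last by move=> a b [].
apply: eq_card => -[v i]; rewrite inE /=.
apply/idP/imsetP.
- case/and3P=> a /eqP e xv. exists v; first by rewrite inE a -e permK xv.
  by rewrite -e permK.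
- case=> w; rewrite inE => /andP[a xw] [-> ->]. by rewrite a permKV eqxx.
Qed.

Lemma card_perm l (s : {perm 'I_l}) (P : 'I_l -> bool) :
  #|[set j | P (s^-1%g j)]| = #|[set i | P i]|.
Proof.
rewrite -[RHS](card_preimset _ (f := (s^-1)%g)); last exact: perm_inj.
by apply: eq_card => j; rewrite !inE.
Qed.

Lemma path_eq (f : V -> nat) (e : rel V) :
  (forall a b, e a b -> f a = f b) -> forall u w, connect e u w -> f u = f w.
Proof.
move=> H u w /connectP [p]; elim: p u => [|y p IH] u /=; first by move=> _ ->.
by case/andP=> /H -> /IH.
Qed.

Lemma parity l (perms : V -> C -> {perm 'I_l}) (x : V -> 'I_l -> bool) c :
  lift_codeword adj perms x ->
  ~~ odd (\sum_(v | adj v c) #|[set i | x v i]|).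
Proof.
move=> Hx.
rewrite (eq_bigr (fun v => \sum_j (x v ((perms v c)^-1%g j) : nat))); last first.
  move=> v _; rewrite -(card_perm (perms v c)) -sum1_card big_mkcond /=.
  by apply: eq_bigr => j _; rewrite inE; case: (x _ _).
rewrite exchange_big /=.
apply: (big_ind (fun n => ~~ odd n)) => //.
  by move=> a b; rewrite oddD => /negPf -> /negPf ->.
move=> j _; have := Hx c j; rewrite count_eq -sum1_card big_mkcond /=.
rewrite [X in _ -> ~~ odd X]big_mkcond /=.
suff -> : (\sum_i (if i \in [set v | adj v c & x v ((perms v c)^-1%g j)] then 1 else 0))
  = \sum_i (if adj i c then (x i ((perms i c)^-1%g j) : nat) else 0) by [].
apply: eq_bigr => v _; rewrite !inE.
by case: (adj v c); case: (x _ _).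
Qed.


Lemma deg2_eq (S : {set V}) l (perms : V -> C -> {perm 'I_l}) (x : V -> 'I_l -> bool) c u w :
  lift_codeword adj perms x -> (forall v i, x v i -> v \in S) ->
  u \in S -> w \in S -> adj u c -> adj w c -> nbS adj S c == 2 ->
  #|[set i | x u i]| = #|[set i | x w i]|.
Proof.
move=> Hx HS uS wS au aw /eqP n2.
have key : forall j a b, a \in S -> b \in S -> adj a c -> adj b c -> a != b ->
    x a ((perms a c)^-1%g j) -> x b ((perms b c)^-1%g j).
  move=> j a b aS bS aa ab nab xa; apply: contraT => xb.
  have := Hx c j; rewrite count_eq.
  set B := [set v | _].
  have sub : B \proper [set v in S | adj v c].
    apply/properP; split.
      by apply/subsetP => v; rewrite !inE => /andP[av xv]; rewrite av (HS _ _ xv).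
    by exists b; rewrite !inE ?bS ?ab // (negbTE xb).
  have := proper_card sub; rewrite -/(nbS adj S c) n2.
  have : a \in B by rewrite inE aa xa.
  move=> aB; have : 0 < #|B| by rewrite card_gt0; apply/set0Pn; exists a.
  by case: #|B| => [|[|]].
have [-> //|nuw] := eqVneq u w.
rewrite -(card_perm (perms u c)) -(card_perm (perms w c)).
apply: eq_card => j; rewrite !inE; apply/idP/idP.
  exact: key.
by apply: key => //; rewrite eq_sym.
Qed.

Lemma support_stopping (q : V -> nat) :
  lift_realizable adj q -> nonzero_vec q -> stopping_set adj (Defs.support q).
Proof.
move=> [l [perms [x [l0 [Hx Hq]]]]] [v0 qv0]; split.
  by apply/set0Pn; exists v0; rewrite inE; apply/eqP.
move=> c; rewrite leq_eqVlt => /orP[/eqP|//].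
move/esym/eqP/cards1P => [v Hv].
have : v \in [set w in Defs.support q | adj w c] by rewrite Hv set11.
rewrite !inE Hq => /andP[]; rewrite -lt0n card_gt0 => /set0Pn [i]; rewrite inE => xvi avc.
have := Hx c (perms v c i); rewrite count_eq.
suff -> : [set w | adj w c & x w ((perms w c)^-1%g (perms v c i))] = [set v] by rewrite cards1.
apply/setP => w; rewrite !inE; apply/idP/idP.
  move=> /andP[awc xw]; apply/eqP/set1P; rewrite -Hv !inE awc andbT Hq -lt0n card_gt0.
  by apply/set0Pn; eexists; rewrite inE; exact: xw.
by move/eqP ->; rewrite avc permK xvi.
Qed.


Lemma sum_ind (S : {set V}) (m : nat) c :
  \sum_(v | adj v c) m * (v \in S) = m * nbS adj S c.
Proof.
rewrite -big_distrr /=; congr (_ * _).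
rewrite /nbS -sum1_card big_mkcond [RHS]big_mkcond /=.
by apply: eq_bigr => v _; rewrite !inE; case: (v \in S); case: (adj v c).
Qed.

Definition tS (S : {set V}) := if [forall c, ~~ odd (nbS adj S c)] then 1 else 2.

Lemma F2 (S : {set V}) q :
  minimal_stopping_set adj S -> ~ property_Theta adj S ->
  lift_realizable adj q -> Defs.support q = S ->
  exists m, [/\ 0 < m, tS S %| m & forall v, q v = m * (v \in S)].
Proof.
move=> [[SN _] _] nT Hl Hs.
have [v0 v0S] := set0Pn _ SN.
have cst : forall w, w \in S -> q w = q v0.
  move: Hl => [l [perms [x [l0 [Hx Hq]]]]] w wS.
  rewrite !Hq; apply: (path_eq (f := fun v => #|[set i | x v i]|) (e := deg2_step adj S)).
    move=> a b /and3P [aS bS /existsP [c /and3P [ac bc n2]]].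
    apply: (deg2_eq (S := S) (c := c) Hx) => // v i xvi.
    by rewrite -Hs inE Hq -lt0n card_gt0; apply/set0Pn; exists i; rewrite inE.
  have [//|nc] := boolP (connect _ w v0).
  by case: nT; exists w, v0; split.
have qv : forall v, q v = q v0 * (v \in S).
  move=> v; case: (boolP (v \in S)) => vS; first by rewrite muln1 cst.
  by move: vS; rewrite -Hs inE negbK muln0 => /eqP.
exists (q v0); split => //.
  by move: v0S; rewrite -Hs inE lt0n.
rewrite /tS; case: ifP => // /negbT; rewrite negb_forall => /existsP [c]; rewrite negbK => oc.
move: Hl => [l [perms [x [l0 [Hx Hq]]]]].
have := parity c Hx.
rewrite (eq_bigr (fun v => q v0 * (v \in S))); last by move=> v _; rewrite -Hq qv.
by rewrite sum_ind oddM oc andbT dvdn2.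
Qed.


Lemma F1a (S : {set V}) : [forall c, ~~ odd (nbS adj S c)] ->
  lift_realizable adj (fun v => 1 * (v \in S)).
Proof.
move=> /forallP He.
exists 1, (fun _ _ => 1%g), (fun v _ => v \in S); split => //; split.
  move=> c j; rewrite (count_eq (fun _ _ => 1%g : {perm 'I_1}) (fun v (_ : 'I_1) => v \in S) c j).
  suff -> : [set v | adj v c & v \in S] = [set v in S | adj v c] by apply: He.
  by apply/setP => v; rewrite !inE andbC.
move=> v; rewrite mul1n; case: (v \in S).
  by rewrite -[LHS](card_ord 1); apply: eq_card => i; rewrite inE.
by apply/esym/eqP; rewrite cards_eq0; apply/eqP/setP => i; rewrite !inE.
Qed.

Definition hn (S : {set V}) (v0 : V) (c : C) (v : V) : nat :=
  let Sc := [set w in S | adj w c] in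
  let a := odflt v0 [pick w in Sc] in
  let b := odflt v0 [pick w in Sc :\ a] in
  if odd #|Sc| then (if v == a then 1 else if v == b then 2 else 0) else 0.

Lemma hn_even S v0 c v : ~~ odd (nbS adj S c) -> hn S v0 c v = 0.
Proof. by rewrite /hn /nbS => /negPf ->. Qed.

Lemma hn_odd S v0 c : stopping_set adj S -> odd (nbS adj S c) ->
  exists a b, [/\ a \in [set w in S | adj w c], b \in [set w in S | adj w c], a != b &
     forall v, hn S v0 c v = if v == a then 1 else if v == b then 2 else 0].
Proof.
move=> [_ Hst] oc.
have k2 : 2 <= nbS adj S c by apply: Hst; move: oc; case: (nbS adj S c).
rewrite /hn -/(nbS adj S c) oc.
case: pickP => [a aS|]; last first.
  move=> H; have : 0 < nbS adj S c by apply: leq_trans k2.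
  by rewrite /nbS card_gt0 => /set0Pn [w]; rewrite H.
case: pickP => [b bS|] /=; last first.
  move=> H; move: k2; rewrite /nbS (cardsD1 a) aS.
  by rewrite ltnS card_gt0 => /set0Pn [w]; rewrite H.
exists a, b; split => //.
- by move: bS; rewrite !inE => /andP[].
- by move: bS; rewrite !inE eq_sym => /andP[].
Qed.

Lemma tperm_eq0 (j h : 'I_3) : (tperm ord0 h j != ord0) = (j != h).
Proof.
by rewrite -[X in tperm _ _ _ != X](tpermR ord0 h) (inj_eq (@perm_inj _ _)).
Qed.

Lemma F1b (S : {set V}) (v0 : V) : stopping_set adj S ->
  lift_realizable adj (fun v => 2 * (v \in S)).
Proof.
move=> Hst.
exists 3, (fun v c => tperm ord0 (inord (hn S v0 c v) : 'I_3)),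
  (fun v i => (v \in S) && (i != ord0)); split => //; split; last first.
  move=> v; case: (v \in S).
    have -> : [set i : 'I_3 | true && (i != ord0)] = [set~ ord0] by apply/setP=> i; rewrite !inE.
    by rewrite cardsC1 card_ord.
  by apply/esym/eqP; rewrite cards_eq0; apply/eqP/setP => i; rewrite !inE.
move=> c j.
rewrite (count_eq (fun v c => tperm ord0 (inord (hn S v0 c v) : 'I_3)) (fun v (i : 'I_3) => (v \in S) && (i != ord0)) c j).
have hv : forall v, hn S v0 c v <= 2.
  move=> v; rewrite /hn; case: ifP => // _; case: ifP => // _; case: ifP => //.
set B := [set v | _].
have HB : B =i [set v | (v \in [set w in S | adj w c]) && (val j != hn S v0 c v)].
  move=> v; rewrite !inE tpermV tperm_eq0 -val_eqE /= inordK ?ltnS ?hv //.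
  by rewrite andbA [adj v c && _]andbC.
rewrite (eq_card HB); clear HB B.
have [oc|ec] := boolP (odd (nbS adj S c)); last first.
  have [j0|jn0] := eqVneq (val j) 0.
    rewrite (eq_card (B := set0)) ?cards0 // => v.
    by rewrite !inE hn_even // j0 eqxx andbF.
  rewrite (eq_card (B := [set w in S | adj w c])) // => v.
  by rewrite !inE hn_even // jn0 andbT.
have [a [b [aS bS nab hab]]] := hn_odd v0 Hst oc.
have aS' := aS; have bS' := bS; rewrite !inE in aS'; rewrite !inE in bS'.
have ka : nbS adj S c = (#|[set w in S | adj w c] :\ a|).+1 by rewrite /nbS (cardsD1 a) aS.
have kb : nbS adj S c = (#|[set w in S | adj w c] :\ b|).+1 by rewrite /nbS (cardsD1 b) bS.
case: j => [[|[|[|//]]] jlt] /=.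
- rewrite (eq_card (B := [set a; b])) ?cards2 ?nab // => v.
  rewrite !inE hab; case: (eqVneq v a) => [->|nva] /=; first by rewrite aS'.
  case: (eqVneq v b) => [->|nvb] /=; first by rewrite bS'.
  by rewrite andbF.
- rewrite (eq_card (B := [set w in S | adj w c] :\ a)); first by move: oc; rewrite ka.
  move=> v; rewrite !inE hab; case: (eqVneq v a) => [->|nva] /=; first by rewrite andbF.
  by case: (eqVneq v b) => [->|nvb] /=; rewrite andbT.
- rewrite (eq_card (B := [set w in S | adj w c] :\ b)); first by move: oc; rewrite kb.
  move=> v; rewrite !inE hab; case: (eqVneq v a) => [->|nva] /=.
    by rewrite andbT nab.
  by case: (eqVneq v b) => [->|nvb] /=; rewrite ?andbF ?andbT. 
Qed.


End L.

Theorem lemma6 (V C : finType) (adj : V -> C -> bool) (S : {set V}) :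
  minimal_stopping_set adj S -> ~ property_Theta adj S ->
  exists t : nat, is_tS adj S t /\ (t = 1 \/ t = 2).
Proof.
move=> Hmin nT.
have [[SN Hst] Hmn] := Hmin.
have [v0 v0S] := set0Pn _ SN.
pose t := tS adj S.
have t12 : t = 1 \/ t = 2 by rewrite /t /tS; case: ifP; [left|right].
have t0 : 0 < t by case: t12 => ->.
have F1 : lift_realizable adj (fun v => t * (v \in S)).
  by rewrite /t /tS; case: ifP => He; [exact: F1a | exact: (F1b v0 Hmin.1)].
pose w := fun v => t * (v \in S).
have suppw : Defs.support w = S.
  by apply/setP => v; rewrite inE /w; case: (v \in S); rewrite ?muln1 ?muln0 -?lt0n.
exists t; split => //; split.
- exists w; split => //.
  + move=> [k [qs [k2 [nz [lr sm]]]]].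
    have sub : forall i, Defs.support (qs i) = S.
      move=> i; have st := support_stopping (lr i) (nz i).
      have ss : Defs.support (qs i) \subset S.
        apply/subsetP => v; rewrite inE; apply: contraR => vS; apply/negPn.
        have : qs i v <= w v by rewrite sm (bigD1 i) //= leq_addr.
        by rewrite /w (negbTE vS) muln0 leqn0 negbK.
      apply/eqP; rewrite eqEproper ss /=; apply/negP => pr; exact: (Hmn _ pr st).
    have ge : forall i, t <= qs i v0.
      move=> i; have [m [m0 tm qm]] := F2 Hmin nT (lr i) (sub i).
      by rewrite qm v0S muln1; exact: dvdn_leq m0 tm.
    have := sm v0; rewrite /w v0S muln1 => e.
    have : \sum_(i < k) t <= \sum_(i < k) qs i v0 by apply: leq_sum.
    rewrite -e sum_nat_const card_ord => H; nia.
  + apply/eqP; rewrite eqn_leq; apply/andP; split.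
      by apply/bigmax_leqP => v _; rewrite /w; case: (v \in S); rewrite ?muln1 ?muln0.
    by have := leq_bigmax (F := w) v0; rewrite /w v0S muln1.
- move=> p lp ip sp v.
  have [m [m0 tm qm]] := F2 Hmin nT lp sp.
  suff mt : m <= t by rewrite qm; case: (v \in S); rewrite ?muln1 ?muln0.
  rewrite leqNgt; apply/negP => tm'.
  apply: ip; move/dvdnP: tm => [k km].
  exists k, (fun _ => w); split; [|split; [|split]].
  + nia.
  + by move=> _; exists v0; rewrite /w v0S muln1; lia.
  + by move=> _; exact: F1.
  + by move=> u; rewrite qm sum_nat_const card_ord /w km mulnA.
Qed.
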